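(* A bidirectional graph $G$ is 2-rooted if and only if it contains a DEP-induced graph as a spanning subgraph.
   Context: Graphs $G=(V,E)$ are directed with $E\subseteq\{(i,k):i\ne k\}$. $G$ is bidirectional if $(i,j)\in E\Rightarrow(j,i)\in E$. A bidirectional path from $i_1$ to $i_k$ is a sequence of distinct vertices $i_1,\dots,i_k$ with $(i_l,i_{l+1}),(i_{l+1},i_l)\in E$ for all $l$. In a bidirectional graph, a vertex $i$ is 2-reachable from a set $U$ of at least two vertices if, after removing any single vertex other than $i$, there is a bidirectional path from some vertex of $U$ to $i$. $G$ is 2-rooted if there is a set of two vertices (roots) from which every other vertex is 2-reachable. A dual-entry path (DEP) with distinct entry vertices $i,j$ and $\ell\ge1$ inner vertices $v_1,\dots,v_\ell$ has vertex set $\{i,j,v_1,\dots,v_\ell\}$ and edge set $\{(i,v_1),(j,v_1)\}$ if $\ell=1$, and $\{(i,v_1),(j,v_\ell)\}\cup\{(v_r,v_{r+1}),(v_{r+1},v_r):1\le r<\ell\}$ if $\ell\ge2$. A DEP-induced graph $\mathcal L_\kappa$ ($\kappa\ge0$): $\mathcal L_0$ consists of two vertices and no edges; for $h=1,\dots,\kappa$, $\mathcal L_h$ is obtained from $\mathcal L_{h-1}$ by attaching a DEP whose two distinct entry vertices belong to $\mathcal L_{h-1}$ and whose inner vertices are new (taking unions of vertex and edge sets). A spanning subgraph of $G$ has vertex set $V$ and edge set contained in $E$. *)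

(* Defs.v *)
From mathcomp Require Import all_boot.
Set Implicit Arguments. Unset Strict Implicit. Unset Printing Implicit Defensive.

Section Graphs.
Variable V : finType.

Definition loopless (E : rel V) : Prop := forall i, ~~ E i i.

Definition bidirectional (E : rel V) : Prop := forall i j, E i j -> E j i.

Definition biedge (E : rel V) : rel V := fun x y => E x y && E y x.

Definition bipath_avoiding (E : rel V) (r u i : V) : Prop :=
  exists p : seq V,
    [/\ path (biedge E) u p, uniq (u :: p), last u p = i & r \notin (u :: p)].

Definition two_reachable (E : rel V) (U : {set V}) (i : V) : Prop :=
  2 <= #|U| /\
  forall r : V, r != i -> exists2 u, u \in U & bipath_avoiding E r u i.

Definition two_rooted (E : rel V) : Prop :=
  exists a b : V, a != b /\
    forall i : V, i \notin [set a; b] -> two_reachable E [set a; b] i.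

(* Edge set of a dual-entry path with entries i, j and inner vertices vs
   (vs nonempty): {(i,v_1),(j,v_l)} ∪ {(v_r,v_{r+1}),(v_{r+1},v_r)}.
   For l = 1 this is {(i,v_1),(j,v_1)}. *)
Definition dep_edges (i j : V) (vs : seq V) : {set V * V} :=
  [set (i, head i vs); (j, last j vs)]
  :|: [set e in zip vs (behead vs)]
  :|: [set e in zip (behead vs) vs].

Inductive dep_induced : {set V} -> {set V * V} -> Prop :=
| dep_base (a b : V) : a != b -> dep_induced [set a; b] set0
| dep_attach (S : {set V}) (F : {set V * V}) (i j : V) (vs : seq V) :
    dep_induced S F -> i \in S -> j \in S -> i != j ->
    vs != [::] -> uniq vs -> all (fun v => v \notin S) vs ->
    dep_induced (S :|: [set x in vs]) (F :|: dep_edges i j vs).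

Definition has_spanning_dep (E : rel V) : Prop :=
  exists F : {set V * V},
    dep_induced [set: V] F /\ forall e, e \in F -> E e.1 e.2.

End Graphs.

(* Main.v *)
Require Import Defs.
From mathcomp Require Import all_boot.
Set Implicit Arguments. Unset Strict Implicit.

Section Aux.
Variable V : finType.
Implicit Types (E : rel V) (S : {set V}).

Lemma biedgeE E : bidirectional E -> forall x y, biedge E x y = E x y.
Proof.
move=> bid x y; rewrite /biedge; case Exy: (E x y) => //=; exact: bid.
Qed.

Lemma zip_path1 (r : rel V) x s : path r x s -> forall e, e \in zip (x::s) s -> r e.1 e.2.
Proof.
elim: s x => [|y s IH] x //= /andP[rxy ps] e; rewrite in_cons => /orP[/eqP->//|].
exact: IH.
Qed.

Lemma zip_path2 (r : rel V) x s : path r x s -> forall e, e \in zip s (x::s) -> r e.2 e.1.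
Proof.
elim: s x => [|y s IH] x //= /andP[rxy ps] e; rewrite in_cons => /orP[/eqP->//|].
exact: IH.
Qed.

Lemma path_zip (r : rel V) x s : (forall e, e \in zip (x::s) s -> r e.1 e.2) -> path r x s.
Proof.
elim: s x => [|y s IH] x //= H; rewrite (H (x, y)) ?mem_head //=.
apply: IH => e he; apply: H; by rewrite /= in_cons he orbT.
Qed.

Definition reach2 E (a b : V) S :=
  forall x, x \in S -> forall r, r != x -> exists u p,
    [/\ u \in [set a; b], path E u p, uniq (u::p), last u p = x &
        r \notin u::p /\ all (fun v => v \in S) (u::p)].

Lemma route E a b S (T : {set V}) k q x r :
  reach2 E a b S -> k \in S -> path E k q -> uniq q ->
  all (fun v => v \notin S) q -> {subset q <= T} -> r != k -> r \notin q ->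
  last k q = x -> S \subset T -> exists u p,
    [/\ u \in [set a; b], path E u p, uniq (u::p), last u p = x &
        r \notin u::p /\ all (fun v => v \in T) (u::p)].
Proof.
move=> R kS pk uq aq qT rk rq lx ST.
have [u [p [uab pp up lp [rp ap]]]] := R k kS r rk.
exists u, (p ++ q); split => //.
- by rewrite cat_path pp lp.
- rewrite -cat_cons cat_uniq up uq andbT; apply/hasPn => v vq; apply/negP => vup.
  by move: (allP ap v vup) (allP aq v vq) => ->.
- by rewrite last_cat lp.
- split; first by rewrite -cat_cons mem_cat negb_or rp.
  rewrite -cat_cons all_cat; apply/andP; split.
    by apply/allP => v /(allP ap) /(subsetP ST).
  by apply/allP => v /qT.
Qed.

Lemma dep_reach E : bidirectional E -> forall S F, dep_induced S F ->
  (forall e, e \in F -> E e.1 e.2) ->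
  exists a b, [/\ a != b, a \in S, b \in S & reach2 E a b S].
Proof.
move=> bid S F H; elim: H => {S F} [a b ab | S F i j vs dS IH iS jS ij vs0 uvs allvs] HF.
  exists a, b; split; rewrite ?in_set2 ?eqxx ?orbT //.
  move=> x xab r rx; exists x, [::]; split => //=.
  by rewrite in_cons negb_or rx xab.
have HF0 : forall e, e \in F -> E e.1 e.2 by move=> e he; apply: HF; rewrite in_setU he.
have HD : forall e, e \in dep_edges i j vs -> E e.1 e.2.
  by move=> e he; apply: HF; rewrite in_setU he orbT.
have [a [b [ab aS bS R]]] := IH HF0.
clear HF HF0.
case: vs vs0 uvs allvs HD => [//|y vs'] _ uvs allvs HD.
set T := S :|: _.
have ST : S \subset T by apply/subsetP => v vS; rewrite in_setU vS.
exists a, b; split; rewrite ?in_setU ?aS ?bS //.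
have pv : path E y vs'.
  apply: path_zip => e he; apply: HD; by rewrite /dep_edges !inE he orbT.
have pi : path E i (y :: vs').
  rewrite /= pv andbT; apply: (HD (i, y)); by rewrite /dep_edges !inE eqxx.
have pj : path E j (rev (y :: vs')).
  rewrite lastI rev_rcons /=; apply/andP; split.
    apply: (HD (j, last y vs')); by rewrite /dep_edges !inE eqxx orbT.
  rewrite rev_path; move: pv; apply: sub_path => u v; exact: bid.
move: pi pj uvs allvs.
set vs := y :: vs' => pi pj uvs allvs.
have vsT : {subset vs <= T} by move=> v hv; rewrite /T in_setU inE hv orbT.
move=> x; rewrite /T in_setU => /orP[xS|xvs] r rx.
  have [u [p [uab pp up lp [rp ap]]]] := R x xS r rx.
  exists u, p; split => //; split => //; by apply/allP => v /(allP ap) /(subsetP ST).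
rewrite inE in xvs.
have [s1 [s2 Evs]] : exists s1 s2, vs = s1 ++ x :: s2.
  exists (take (index x vs) vs), (drop (index x vs).+1 vs).
  rewrite -{1}(cat_take_drop (index x vs) vs) (drop_nth x); last by rewrite index_mem.
  by rewrite nth_index.
have notS : forall v, v \in vs -> v \notin S by move=> v /(allP allvs).
case: (boolP ((r != i) && (r \notin s1))) => [/andP[ri rs1]|].
  apply: (@route E a b S T i (rcons s1 x) x r R iS _ _ _ _ ri _ _ ST).
  - by move: pi; rewrite Evs -cat_rcons cat_path => /andP[].
  - by move: uvs; rewrite Evs -cat_rcons cat_uniq => /and3P[].
  - apply/allP => v hv; apply: notS; by rewrite Evs -cat_rcons mem_cat hv.
  - move=> v hv; apply: vsT; by rewrite Evs -cat_rcons mem_cat hv.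
  - by rewrite mem_rcons in_cons negb_or rx.
  - by rewrite last_rcons.
rewrite negb_and !negbK => hr.
have rnot : r \notin x :: s2.
  case/orP: hr => [/eqP-> | rs1].
    apply/negP => h; have := notS i; rewrite Evs mem_cat h orbT iS.
    by move/(_ isT).
  move: uvs; rewrite Evs cat_uniq => /and3P[_ /hasPn /(_ r)]; rewrite /= => h _.
  by apply/negP => /h; rewrite rs1.
have rj : r != j.
  case/orP: hr => [/eqP-> //| rs1].
  apply/negP => /eqP rj; have := notS r; rewrite Evs mem_cat rs1 rj jS; by move/(_ isT).
apply: (@route E a b S T j (rev (x :: s2)) x r R jS _ _ _ _ rj _ _ ST).
- by move: pj; rewrite Evs rev_cat cat_path => /andP[].
- by move: uvs; rewrite Evs cat_uniq rev_uniq => /and3P[].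
- apply/allP => v; rewrite mem_rev => hv; apply: notS; by rewrite Evs mem_cat hv orbT.
- move=> v; rewrite mem_rev => hv; apply: vsT; by rewrite Evs mem_cat hv orbT.
- by rewrite mem_rev.
- by rewrite rev_cons last_rcons.
Qed.

Lemma split_last S (e : rel V) u p :
  has (fun v => v \in S) (u::p) -> last u p \notin S -> path e u p ->
  exists j y q, [/\ j \in S, j \in u::p, path e j (y::q), last y q = last u p &
     all (fun v => v \notin S) (y::q) /\ (uniq (u::p) -> uniq (y::q))].
Proof.
elim: p u => [|y p IH] u /=.
  by rewrite orbF => ->.
move=> hu hl /andP[euy pp].
case h: (has (fun v => v \in S) (y :: p)).
  have [j [y' [q [jS jp pj lq [aq uq]]]]] := IH y h hl pp.
  exists j, y', q; split => //.
    by rewrite in_cons jp orbT.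
  split => //; by move=> /andP[_ /uq].
have uS : u \in S.
  by apply/negPn/negP => nu; move: hu h; rewrite /= (negbTE nu) /= => ->.
exists u, y, p; split => //=.
- by rewrite in_cons eqxx.
- by rewrite euy.
- split; first by move: h => /negbT; rewrite -all_predC.
  by case/andP.
Qed.

End Aux.

Unset Implicit Arguments.

Theorem lemma1 (V : finType) (E : rel V) :
  loopless E -> bidirectional E ->
  (two_rooted E <-> has_spanning_dep E).
Proof.
move=> _ bid; split.
- case=> a [b [ab R2]].
  have conv : forall i, i \notin [set a; b] -> forall r, r != i ->
     exists u p, [/\ u \in [set a; b], path E u p, uniq (u::p), last u p = i
                  & r \notin u::p].
    move=> i hi r ri; have [_ /(_ r ri) [u uab [p [pp up lp rp]]]] := R2 i hi.
    exists u, p; split => //; by rewrite -(eq_path (biedgeE bid)).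
  suff main : forall n S F, #|~: S| <= n -> dep_induced S F ->
      (forall e, e \in F -> E e.1 e.2) -> a \in S -> b \in S -> has_spanning_dep E.
    apply: (main _ [set a; b] set0 (leqnn _)); first exact: dep_base.
    - by move=> e; rewrite inE.
    - by rewrite in_set2 eqxx.
    - by rewrite in_set2 eqxx orbT.
  elim=> [|n IH] S F hn dS HF aS bS.
  + have ST : S = setT.
      apply/setP => v; rewrite inE; apply/negPn/negP => vS.
      by move: hn; rewrite leqn0 => /eqP/cards0_eq/setP/(_ v); rewrite !inE vS.
    by exists F; rewrite -ST.
  case: (pickP (fun x => x \notin S)) => [x xS | H]; last first.
    have ST : S = setT by apply/setP => v; rewrite inE; move: (H v) => /= /negbFE.
    by exists F; rewrite -ST.
  have xab : x \notin [set a; b].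
    by rewrite in_set2; apply/orP => -[] /eqP ex; move: xS; rewrite ex ?aS ?bS.
  have ax : a != x by apply/eqP => ex; move: xS; rewrite -ex aS.
  have [u [p [uab pp up lp rp]]] := conv x xab a ax.
  have hu : has (fun v => v \in S) (u :: p).
    by rewrite /= (_ : u \in S) //; move: uab; rewrite in_set2 => /orP[]/eqP->.
  have [i [w [q [iS _ piw _ [aq _]]]]] := split_last hu (eq_ind_r (fun z => z \notin S) xS lp) pp.
  move: piw aq => /= /andP[Eiw _] /andP[wS _].
  have wab : w \notin [set a; b].
    by rewrite in_set2; apply/orP => -[] /eqP ex; move: wS; rewrite ex ?aS ?bS.
  have iw : i != w by apply/eqP => ex; move: wS; rewrite -ex iS.
  have [u' [p' [uab' pp' up' lp' rp']]] := conv w wab i iw.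
  have hu' : has (fun v => v \in S) (u' :: p').
    by rewrite /= (_ : u' \in S) //; move: uab'; rewrite in_set2 => /orP[]/eqP->.
  have [j [y [q' [jS jp pj lq [aq' uq']]]]] := split_last hu' (eq_ind_r (fun z => z \notin S) wS lp') pp'.
  have ji : j != i by apply/eqP => ej; move: rp'; rewrite -ej jp.
  have uq := uq' up'.
  have dS' := dep_attach dS jS iS ji (isT : y :: q' != [::]) uq aq'.
  apply: (IH _ _ _ dS').
  + rewrite -ltnS; apply: (leq_trans _ hn); apply: proper_card; apply/properP; split.
      by rewrite setCS subsetUl.
    exists y; first by move: aq' => /andP[]; rewrite inE.
    by rewrite !inE eqxx !orbT.
  + move=> e; rewrite in_setU => /orP[/HF //|].
    rewrite /dep_edges !inE => /orP[/orP[/orP[/eqP-> | /eqP->] | hz] | hz].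
    * by move: pj => /= /andP[].
    * by rewrite /= lq lp'.
    * move: pj => /= /andP[_ pj']; exact: zip_path1 pj' e hz.
    * move: pj => /= /andP[_ pj']; apply: bid; exact: zip_path2 pj' e hz.
  + by rewrite in_setU aS.
  + by rewrite in_setU bS.
- case=> F [dF HF].
  have [a [b [ab _ _ R]]] := dep_reach bid dF HF.
  exists a, b; split => // i hi; split; first by rewrite cards2 ab.
  move=> r ri; have [u [p [uab pp up lp [rp _]]]] := R i (in_setT i) r ri.
  exists u => //; exists p; split => //; by rewrite (eq_path (biedgeE bid)).
Qed.
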